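(* Let $A\in\mathbb{R}^{n\times n}$ be symmetric with smallest eigenvalue $\alpha_n$, $g\in\mathbb{R}^n$ nonzero, $\Delta>0$, and let $x_{opt}$ be a global minimizer of $\frac12x^TAx+x^Tg$ subject to $\|x\|\le\Delta$ with Lagrange multiplier $\lambda_{opt}\ge0$ (i.e. $(A+\lambda_{opt}I)x_{opt}=-g$, $\lambda_{opt}(\Delta-\|x_{opt}\|)=0$, $A+\lambda_{opt}I\succeq0$). Suppose $\|x_{opt}\|=\Delta$. Let $$M=\begin{pmatrix}-A&\frac{gg^T}{\Delta^2}\\ I&-A\end{pmatrix}\in\mathbb{R}^{2n\times2n}.$$ Then the TRS is in the easy case, i.e. $\lambda_{opt}>-\alpha_n$, if and only if $\lambda_{opt}$ is a simple eigenvalue of $M$.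
   Context: Norms are Euclidean. By standard theory either $\lambda_{opt}>-\alpha_n$ (easy case) or $\lambda_{opt}=-\alpha_n$ (hard case, in which $g\perp\mathcal{N}(A-\alpha_nI)$). *)

(* Defs.v *)
From HB Require Import structures.
From mathcomp Require Import all_boot all_order all_algebra.
Set Implicit Arguments. Unset Strict Implicit. Unset Printing Implicit Defensive.
Import Order.TTheory GRing.Theory Num.Theory.
Local Open Scope ring_scope.

Definition vnorm (R : rcfType) (n : nat) (x : 'cV[R]_n) : R :=
  Num.sqrt (\sum_(i < n) x i 0 ^+ 2).

Definition trs_obj (R : rcfType) (n : nat) (A : 'M[R]_n) (g x : 'cV[R]_n) : R :=
  2^-1 * (x^T *m A *m x) 0 0 + (x^T *m g) 0 0.

Definition psd (R : rcfType) (n : nat) (B : 'M[R]_n) : Prop :=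
  forall v : 'cV[R]_n, 0 <= (v^T *m B *m v) 0 0.

Definition Mmat (R : rcfType) (n : nat) (A : 'M[R]_n) (g : 'cV[R]_n) (D : R)
  : 'M[R]_(n + n) :=
  block_mx (- A) ((D ^+ 2)^-1 *: (g *m g^T)) 1%:M (- A).

Definition simple_eigenvalue (R : rcfType) (m : nat) (B : 'M[R]_m) (l : R) : Prop :=
  mup l (char_poly B) = 1%N.

(* Main.v *)
Require Import Defs.
From HB Require Import structures.
From mathcomp Require Import all_boot all_order all_algebra.
From mathcomp Require Import ring lra.
Import Order.TTheory GRing.Theory Num.Theory.
Set Implicit Arguments. Unset Strict Implicit.
Local Open Scope ring_scope.

Section Col.
Variable (R : comNzRingType) (n : nat).

Definition colrep (N : 'M[R]_n) (k : 'I_n) (w : 'cV[R]_n) : 'M[R]_n :=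
  \matrix_(i, j) if j == k then w i 0 else N i j.

Lemma det_colrep N k w : \det (colrep N k w) = \sum_i w i 0 * cofactor N i k.
Proof.
rewrite (expand_det_col _ k); apply: eq_bigr => i _.
rewrite mxE eqxx; congr (_ * _).
rewrite /cofactor; congr (_ * _); congr (\det _).
apply/matrixP => a b; rewrite !mxE.
by rewrite eq_sym (negbTE (neq_lift k b)).
Qed.

Lemma det_colrepZ N k c w : \det (colrep N k (c *: w)) = c * \det (colrep N k w).
Proof.
rewrite !det_colrep mulr_sumr; apply: eq_bigr => i _.
by rewrite mxE mulrA.
Qed.

Lemma det_colrep1 k v : \det (colrep 1%:M k v) = v k 0.
Proof.
have c1 i : cofactor (1%:M : 'M[R]_n) i k = (k == i)%:R.
  by have := congr1 (fun M : 'M[R]_n => M k i) (@adj1 R n); rewrite !mxE.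
rewrite det_colrep (bigD1 k) //= big1 ?addr0.
  by rewrite c1 eqxx mulr1.
by move=> i /negbTE ik; rewrite c1 eq_sym ik mulr0.
Qed.

Lemma mul_colrep N k v : N *m colrep 1%:M k v = colrep N k (N *m v).
Proof.
apply/matrixP => i j; rewrite !mxE.
case: eqP => [->|jk].
  by apply: eq_bigr => l _; rewrite mxE eqxx.
transitivity ((N *m 1%:M) i j); last by rewrite mulmx1.
rewrite mxE; apply: eq_bigr => l _; rewrite !mxE.
by case: eqP.
Qed.

Lemma det_col_factor N k v c w : N *m v = c *: w ->
  \det N * v k 0 = c * \det (colrep N k w).
Proof.
by move=> H; rewrite -det_colrep1 -det_mulmx mul_colrep H det_colrepZ.
Qed.

Lemma det_block_special (P Q : 'M[R]_n) :
  \det (block_mx P Q (- 1%:M) P) = \det (P *m P + Q).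
Proof.
set E := block_mx 0 (- 1%:M) 1%:M P.
have dE : \det E = 1.
  have -> : E = block_mx 1%:M (- 1%:M) 0 1%:M *m block_mx 1%:M 0 1%:M 1%:M
               *m block_mx 1%:M (- 1%:M) 0 1%:M *m block_mx 1%:M P 0 1%:M.
    rewrite !mulmx_block !(mul0mx, mulmx0, mul1mx, mulmx1, addr0, add0r, mulNmx, mulmxN).
    by rewrite !subrr mul0mx oppr0 !add0r addNr addr0.
  by rewrite !(@det_mulmx R (n+n)) !(det_ublock, det_lblock) !det1 !mulr1.
have := det_mulmx E (block_mx P Q (- 1%:M) P).
rewrite dE mul1r => <-.
rewrite mulmx_block !(mul0mx, mulmx0, mul1mx, mulmx1, addr0, add0r, mulNmx, mulmxN, opprK).
by rewrite subrr det_ublock det1 mul1r addrC.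
Qed.
End Col.

Lemma colrep_map (R S : comNzRingType) n (f : R -> S) (N : 'M[R]_n) k w :
  map_mx f (colrep N k w) = colrep (map_mx f N) k (map_mx f w).
Proof. by apply/matrixP => i j; rewrite !mxE; case: eqP => _; rewrite ?mxE. Qed.

Section Poly.
Variables (R : rcfType) (n : nat) (A G : 'M[R]_n) (lam : R).
Local Notation phi := (map_mx (@polyC R)).
Definition sX : {poly R} := 'X - lam%:P.
Definition Bm := A + lam%:M.
Definition Pm : 'M[{poly R}]_n := 'X%:M + phi A.

Lemma P_eq : Pm = sX%:M + phi Bm.
Proof.
by rewrite /Pm /Bm /sX map_mxD map_scalar_mx /= raddfB /= addrACA addNr addr0.
Qed.

Lemma Nz (z : 'cV[R]_n) : (Pm *m Pm - phi G) *m phi z =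
  (sX * sX) *: phi z + sX *: phi (Bm *m z) + sX *: phi (Bm *m z)
   + phi ((Bm *m Bm - G) *m z).
Proof.
have Pz (y : 'cV[R]_n) : Pm *m phi y = sX *: phi y + phi (Bm *m y).
  by rewrite P_eq mulmxDl mul_scalar_mx map_mxM.
rewrite mulmxBl -mulmxA Pz mulmxDr -scalemxAr Pz Pz -!map_mxM.
rewrite mulmxBl map_mxB -!mulmxA scalerDr scalerA !addrA.
done.
Qed.

Lemma evK m p (K : 'M[R]_(m, p)) : map_mx (horner_eval lam) (phi K) = K.
Proof. by rewrite -map_mx_comp; apply: map_mx_id => a /=; rewrite horner_evalE hornerC. Qed.

Lemma evN : map_mx (horner_eval lam) (Pm *m Pm - phi G) = Bm *m Bm - G.
Proof.
rewrite map_mxB map_mxM P_eq map_mxD map_scalar_mx /= horner_evalE /sX.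
by rewrite hornerXsubC subrr (raddf0 (@scalar_mx R n)) add0r !evK.
Qed.

End Poly.


Section Real.
Variable (R : rcfType).

Lemma sq_sum m (y : 'cV[R]_m) : (y^T *m y) 0 0 = \sum_i y i 0 ^+ 2.
Proof. by rewrite mxE; apply: eq_bigr => i _; rewrite mxE expr2. Qed.

Lemma sq_ge0 m (y : 'cV[R]_m) : 0 <= (y^T *m y) 0 0.
Proof. by rewrite sq_sum sumr_ge0 // => i _; rewrite sqr_ge0. Qed.

Lemma sq_eq0 m (y : 'cV[R]_m) : (y^T *m y) 0 0 = 0 -> y = 0.
Proof.
rewrite sq_sum => /psumr_eq0P H; apply/matrixP => i j.
rewrite (ord1 j) mxE; apply/eqP; rewrite -sqrf_eq0; apply/eqP.
by apply: H => // l _; rewrite sqr_ge0.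
Qed.

Lemma bil_expand m (B : 'M[R]_m) (v y : 'cV[R]_m) t :
  ((v + t *: y)^T *m B *m (v + t *: y)) 0 0 =
  (v^T *m B *m v) 0 0 + t * (v^T *m B *m y) 0 0 + t * (y^T *m B *m v) 0 0
  + t ^+ 2 * (y^T *m B *m y) 0 0.
Proof.
rewrite [(v + _)^T]linearD /=.
have -> : (t *: y)^T = t *: y^T by apply/matrixP => i j; rewrite !mxE.
rewrite !mulmxDl !mulmxDr -!scalemxAl -!scalemxAr !mxE.
by rewrite expr2 !addrA mulrA.
Qed.

Lemma psd0 m (B : 'M[R]_m) (v : 'cV[R]_m) : B^T = B -> psd B ->
  (v^T *m B *m v) 0 0 = 0 -> B *m v = 0.
Proof.
move=> BT pB v0; set y := B *m v.
set a := (y^T *m y) 0 0; set b := (y^T *m B *m y) 0 0.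
have a0 : 0 <= a := sq_ge0 y.
have b0 : 0 <= b := pB y.
have e1 : (v^T *m B *m y) 0 0 = a by rewrite /a /y -{1}BT -trmx_mul mulmxA.
have e2 : (y^T *m B *m v) 0 0 = a by rewrite /a /y -mulmxA.
have := pB (v + (- a / (b + 1)) *: y).
rewrite bil_expand v0 e1 e2 => h.
have hb : 0 < b + 1 by lra.
set t := - a / (b + 1) in h.
have ht : t * (b + 1) = - a by rewrite /t mulfVK // gt_eqF.
have h2 : 0 <= (b + 1) ^+ 2 * (0 + t * a + t * a + t ^+ 2 * b).
  by rewrite mulr_ge0 // sqr_ge0.
have e : (b + 1) ^+ 2 * (0 + t * a + t * a + t ^+ 2 * b) =
  2 * a * (t * (b + 1)) * (b + 1) + (t * (b + 1)) ^+ 2 * b by ring.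
rewrite e ht in h2.
have : a = 0 by nra.
by move/sq_eq0.
Qed.

End Real.

Lemma charM (R : rcfType) n (A : 'M[R]_n) (g : 'cV[R]_n) (D : R) :
  char_poly (Mmat A g D) =
  \det (Pm A *m Pm A - map_mx (@polyC R) ((D ^+ 2)^-1 *: (g *m g^T))).
Proof.
rewrite /char_poly /char_poly_mx /Mmat map_block_mx (scalar_mx_block n n).
rewrite opp_block_mx add_block_mx !map_mxN map_mx1 !opprK !sub0r.
by rewrite -det_block_special.
Qed.

Theorem theorem4p2 (R : rcfType) (n : nat) (A : 'M[R]_n) (g : 'cV[R]_n)
    (D alpha lam : R) (xopt : 'cV[R]_n) :
  A^T = A ->
  eigenvalue A alpha ->
  (forall mu, eigenvalue A mu -> alpha <= mu) ->
  g != 0 ->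
  0 < D ->
  vnorm xopt <= D ->
  (forall y : 'cV[R]_n, vnorm y <= D -> trs_obj A g xopt <= trs_obj A g y) ->
  0 <= lam ->
  (A + lam%:M) *m xopt = - g ->
  lam * (D - vnorm xopt) = 0 ->
  psd (A + lam%:M) ->
  vnorm xopt = D ->
  (- alpha < lam <-> simple_eigenvalue (Mmat A g D) lam).
Proof.
move=> AT eigA minA g0 D0 _ _ lam0 Hx _ psdB nx.
set G := (D ^+ 2)^-1 *: (g *m g^T).
have BE : A + lam%:M = Bm A lam by [].
rewrite BE in Hx psdB.
set B := Bm A lam in Hx psdB *.
have BT : B^T = B by rewrite /B /Bm linearD /= AT tr_scalar_mx.
have gE : g = - (B *m xopt) by rewrite Hx opprK.
have xx : (xopt^T *m xopt) 0 0 = D ^+ 2.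
  rewrite -nx /vnorm sqr_sqrtr ?sumr_ge0 ?sq_sum // => i _; exact: sqr_ge0.
have D2 : D ^+ 2 != 0 by rewrite expf_neq0 // gt_eqF.
have charE := charM A g D.
have cp0 : char_poly (Mmat A g D) != 0 := monic_neq0 (char_poly_monic _).
have Gz (z : 'cV[R]_n) :
    G *m z = ((D ^+ 2)^-1 * ((B *m xopt)^T *m z) 0 0) *: (B *m xopt).
  rewrite /G -scalemxAl -mulmxA [g^T *m z]mx11_scalar mul_mx_scalar scalerA.
  rewrite gE; have -> : (- (B *m xopt))^T = - (B *m xopt)^T.
    by apply/matrixP => i j; rewrite !mxE.
  by rewrite mulNmx mxE mulrN scaleNr scalerN opprK.
have N0T : (B *m B - G)^T = B *m B - G.
  by rewrite linearB /= trmx_mul BT /G linearZ /= trmx_mul trmxK.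
set s := sX lam.
set N := Pm A *m Pm A - map_mx (@polyC R) G.
split.
- move=> easy.
  have Binj (z : 'cV[R]_n) : B *m z = 0 -> z = 0.
    move=> Bz; apply/eqP; apply: contraTT easy => nz; rewrite -leNgt.
    have Az : A *m z = (- lam) *: z.
      apply/eqP; move: Bz; rewrite /B /Bm mulmxDl mul_scalar_mx scaleNr => /eqP.
      by rewrite addr_eq0.
    have : eigenvalue A (- lam).
      apply/eigenvalueP; exists z^T; last by rewrite trmx_eq0.
      by rewrite -{1}AT -trmx_mul Az linearZ.
    move/minA; lra.
  have Bunit : B \in unitmx.
    rewrite unitmxE unitfE; apply/negP => /det0P [v v0 vB].
    have : B *m v^T = 0 by rewrite -{1}BT -trmx_mul vB trmx0.
    by move/Binj/eqP; rewrite trmx_eq0 (negbTE v0).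
  set u := invmx B *m xopt.
  have Bu : B *m u = xopt by rewrite /u mulKVmx.
  have x0 : xopt != 0.
    apply/eqP => x0; move: xx; rewrite x0 mulmx0 mxE => /esym/eqP.
    by rewrite (negbTE D2).
  have u0 : u != 0 by apply: contraNneq x0 => u0; rewrite -Bu u0 mulmx0.
  have [k [j ukj]] : exists k j, u k j != 0 by apply/matrix0Pn.
  rewrite (ord1 j) in ukj.
  have xBx : ((B *m xopt)^T *m u) 0 0 = D ^+ 2.
    by rewrite trmx_mul BT -mulmxA Bu.
  have N0u : (B *m B - G) *m u = 0.
    by rewrite mulmxBl -mulmxA Bu Gz xBx mulVf // scale1r subrr.
  set w := s *: map_mx (@polyC R) u + map_mx (@polyC R) xopt + map_mx (@polyC R) xopt.
  have Nu : N *m map_mx (@polyC R) u = s *: w.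
    rewrite /N (@Nz _ _ A G lam) Bu N0u map_mx0 addr0 /w !scalerDr scalerA.
    done.
  have := @det_col_factor _ _ N k _ _ _ Nu.
  rewrite mxE => hdet.
  set q := \det (colrep N k w) in hdet.
  have cpE : char_poly (Mmat A g D) = s * (q * ((u k 0)^-1)%:P).
    by rewrite charE -/G -/N mulrA -hdet -mulrA -polyCM mulfV // mulr1.
  have ew : map_mx (horner_eval lam) w = xopt + xopt.
    apply/matrixP => i j'; rewrite !mxE /= !horner_evalE !hornerE /s /sX.
    by rewrite subrr mul0r add0r.
  have qroot : ~~ root (q * ((u k 0)^-1)%:P) lam.
    rewrite rootE hornerM hornerC mulf_eq0 invr_eq0 (negbTE ukj) orbF.
    rewrite -horner_evalE /q -det_map_mx colrep_map (@evN _ _ A G lam) ew.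
    apply/negP => /det0P [z z0 zQ].
    have zN0k j' : j' != k -> (z *m (B *m B - G)) 0 j' = 0.
      move=> jk; transitivity ((z *m colrep (B *m B - G) k (xopt + xopt)) 0 j');
        last by rewrite zQ mxE.
      by rewrite !mxE; apply: eq_bigr => l _; rewrite !mxE (negbTE jk).
    have zx : (z *m xopt) 0 0 = 0.
      have : (z *m (xopt + xopt)) 0 0 = 0.
        transitivity ((z *m colrep (B *m B - G) k (xopt + xopt)) 0 k);
          last by rewrite zQ mxE.
        by rewrite !mxE; apply: eq_bigr => l _; rewrite !mxE eqxx.
      rewrite mulmxDr mxE; lra.
    have zN0 : z *m (B *m B - G) = 0.
      have e : (z *m (B *m B - G) *m u) 0 0 = (z *m (B *m B - G)) 0 k * u k 0.
        rewrite mxE (bigD1 k) //= big1 ?addr0 // => j' jk.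
        by rewrite zN0k ?mul0r.
      have zk : (z *m (B *m B - G)) 0 k = 0.
        move: e; rewrite -mulmxA N0u mulmx0 mxE => /esym/eqP.
        by rewrite mulf_eq0 (negbTE ukj) orbF => /eqP.
      apply/rowP => j'; rewrite [RHS]mxE.
      by case: (eqVneq j' k) => [->|jk]; [exact: zk | exact: zN0k].
    have N0z : (B *m B - G) *m z^T = 0.
      by rewrite -N0T -trmx_mul zN0 trmx0.
    set c := (D ^+ 2)^-1 * ((B *m xopt)^T *m z^T) 0 0.
    have h1 : B *m (B *m z^T - c *: xopt) = 0.
      by rewrite mulmxBr -scalemxAr -Gz mulmxA -mulmxBl N0z.
    have h2 : B *m (z^T - c *: u) = 0.
      by rewrite mulmxBr -scalemxAr Bu; exact: Binj h1.
    have zu : z^T = c *: u.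
      by apply/eqP; rewrite -subr_eq0; apply/eqP; exact: Binj h2.
    have ux : (u^T *m xopt) 0 0 != 0.
      apply/eqP => ux0.
      have : B *m u = 0 by apply: psd0 => //; rewrite -mulmxA Bu.
      by rewrite Bu => /eqP; rewrite (negbTE x0).
    have c0 : c = 0.
      move: zx; rewrite -[z]trmxK zu linearZ /= -scalemxAl mxE => /eqP.
      by rewrite mulf_eq0 (negbTE ux) orbF => /eqP.
    by move: zu; rewrite c0 scale0r => /eqP; rewrite trmx_eq0 (negbTE z0).
  rewrite /simple_eigenvalue cpE mupMl // /s /sX -[X in mup _ X]expr1.
  by rewrite mup_XsubCX eqxx.
- move=> simple; rewrite ltNge; apply/negP => hard.
  have [v Av v0] := eigenvalueP eigA.
  set y := v^T.
  have Ay : A *m y = alpha *: y by rewrite /y -{1}AT -trmx_mul Av linearZ.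
  have By : B *m y = (alpha + lam) *: y.
    by rewrite /B /Bm mulmxDl Ay mul_scalar_mx scalerDl.
  have ypos : 0 < (y^T *m y) 0 0.
    rewrite lt_def sq_ge0 andbT; apply/eqP => /sq_eq0/eqP.
    by rewrite trmx_eq0 (negbTE v0).
  have al : alpha + lam = 0.
    have := psdB y; rewrite -mulmxA By -scalemxAr mxE.
    rewrite pmulr_lge0 // => h; lra.
  have By0 : B *m y = 0 by rewrite By al scale0r.
  have Gy : G *m y = 0.
    by rewrite Gz trmx_mul BT -mulmxA By0 mulmx0 mxE mulr0 scale0r.
  have Ny : N *m map_mx (@polyC R) y = (s * s) *: map_mx (@polyC R) y.
    by rewrite /N (@Nz _ _ A G lam) mulmxBl -mulmxA By0 mulmx0 Gy subrr !map_mx0 !scaler0 !addr0.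
  have y0 : y != 0 by rewrite trmx_eq0.
  have [k [j ykj]] : exists k j, y k j != 0 by apply/matrix0Pn.
  rewrite (ord1 j) in ykj.
  have := @det_col_factor _ _ N k _ _ _ Ny.
  rewrite mxE => hdet.
  have dv : ('X - lam%:P) ^+ 2 %| char_poly (Mmat A g D).
    have -> : char_poly (Mmat A g D) = (\det N * (y k 0)%:P) * ((y k 0)^-1)%:P.
      by rewrite -mulrA -polyCM mulfV // mulr1 charE.
    rewrite hdet expr2 -/(sX lam) -/s; apply: dvdp_mulr; exact: dvdp_mulIl.
  have := mup_geq lam 2 cp0.
  by rewrite simple dv.
Qed.
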